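(* Let $P\in\mathbb{R}_+^{n\times n}$ be a stochastic irreducible matrix, $w\in\mathbb{R}^n_+$, $c\in\mathbb{R}^n$, and let $\mathcal X=\{x\in\mathbb{R}^n:\,x=S_0^w(P'x+c)\}$. Let $\pi$ be the unique invariant probability vector of $P$ ($\pi=P'\pi$, $\pi\ge0$, $\mathbbm{1}'\pi=1$; it has positive entries), and, when $\sum_ic_i=0$, let $\nu=\frac12\sum_{k\ge0}\left(\frac{I+P'}{2}\right)^kc$ (a convergent series in that case). Then $\mathcal X$ contains more than one element if and only if $\sum_ic_i=0$ and $$\min_i\left\{\frac{\nu_i}{\pi_i}\right\}+\min_i\left\{\frac{w_i-\nu_i}{\pi_i}\right\}>0.$$ Moreover, in this case, $$\mathcal X=\left\{\nu+\alpha\pi:\,-\min_i\left\{\frac{\nu_i}{\pi_i}\right\}\le\alpha\le\min_i\left\{\frac{w_i-\nu_i}{\pi_i}\right\}\right\}.$$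
   Context: $P$ stochastic: nonnegative with $P\mathbbm{1}=\mathbbm{1}$; irreducible: the directed graph with a link $(i,j)$ whenever $P_{ij}>0$ is strongly connected. $(S_0^w(x))_i=\min\{\max\{x_i,0\},w_i\}$; $P'$ is the transpose. *)

(* Defs.v *)
From HB Require Import structures.
From mathcomp Require Import all_boot all_order all_algebra.
From mathcomp Require Import all_classical all_reals all_analysis.
Set Implicit Arguments. Unset Strict Implicit. Unset Printing Implicit Defensive.
Import Order.TTheory GRing.Theory Num.Theory numFieldNormedType.Exports.
Local Open Scope ring_scope.

Section Defs.
Variables (R : realType) (n : nat).

Definition stochastic (P : 'M[R]_n) : Prop :=
  (forall i j, 0 <= P i j) /\ P *m (const_mx 1 : 'cV[R]_n) = const_mx 1.

Definition irreducible (P : 'M[R]_n) : Prop :=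
  forall i j : 'I_n, connect [rel a b | 0 < P a b] i j.

Definition S0 (w x : 'cV[R]_n) : 'cV[R]_n :=
  \col_i Num.min (Num.max (x i 0) 0) (w i 0).

Definition solset (P : 'M[R]_n) (w c : 'cV[R]_n) : set 'cV[R]_n :=
  [set x | x = S0 w (P^T *m x + c)].

Definition halfstep (P : 'M[R]_n) (v : 'cV[R]_n) : 'cV[R]_n :=
  2^-1 *: (v + P^T *m v).

Definition nu (P : 'M[R]_n) (c : 'cV[R]_n) : 'cV[R]_n :=
  \col_i (2^-1 * limn (series (fun k => (iter k (halfstep P) c) i 0))).

End Defs.

Definition minI (R : realType) (n : nat) (F : 'I_n.+1 -> R) : R :=
  \big[Num.min/F ord0]_(i < n.+1) F i.

(* Main.v *)
Require Import Defs.
From HB Require Import structures.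
From mathcomp Require Import all_boot all_order all_algebra.
From mathcomp Require Import all_classical all_reals all_analysis.
From mathcomp Require Import lra ring.
Import Order.TTheory GRing.Theory Num.Theory.
Local Open Scope ring_scope.
Local Open Scope classical_set_scope.

Section Clamp.
Variable R : realType.

Lemma maxP' (x y : R) : (Num.max x y = x /\ y <= x) \/ (Num.max x y = y /\ x < y).
Proof.
case: (leP y x) => h; [left|right]; split => //; rewrite ?max_l ?max_r // ltW.
Qed.

Lemma minP' (x y : R) : (Num.min x y = x /\ x <= y) \/ (Num.min x y = y /\ y < x).
Proof.
case: (leP x y) => h; [left|right]; split => //; rewrite ?min_l ?min_r // ltW.
Qed.

Lemma clampP (w t : R) : 0 <= w ->
  (t <= 0 /\ Num.min (Num.max t 0) w = 0) \/
  (0 <= t <= w /\ Num.min (Num.max t 0) w = t) \/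
  (w <= t /\ Num.min (Num.max t 0) w = w).
Proof.
move=> w0; have [[-> h1]|[-> h1]] := maxP' t 0.
  have [[-> h2]|[-> h2]] := minP' t w.
    by right; left; rewrite h1 h2.
  by right; right; split => //; exact: ltW.
have [[-> h2]|[-> h2]] := minP' 0 w.
  by left; split => //; exact: ltW.
lra.
Qed.

Lemma clamp1 (w a b : R) : 0 <= w ->
  Num.max (Num.min (Num.max a 0) w - Num.min (Num.max b 0) w) 0 <= Num.max (a - b) 0.
Proof.
move=> w0.
rewrite ge_max; apply/andP; split; last by rewrite le_max lexx orbT.
have [[-> h6]|[-> h6]] := maxP' (a - b) 0;
have [[h1 ->]|[[/andP[h1 h1'] ->]|[h1 ->]]] := clampP w a w0;
have [[h2 ->]|[[/andP[h2 h2'] ->]|[h2 ->]]] := clampP w b w0; lra.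
Qed.

Lemma clamp2 (w a b : R) : 0 <= w -> b < a ->
  Num.min (Num.max a 0) w - Num.min (Num.max b 0) w = a - b ->
  Num.min (Num.max a 0) w = a /\ Num.min (Num.max b 0) w = b.
Proof.
move=> w0 ba.
have [[h1 ->]|[[/andP[h1 h1'] ->]|[h1 ->]]] := clampP w a w0;
have [[h2 ->]|[[/andP[h2 h2'] ->]|[h2 ->]]] := clampP w b w0;
move=> h; split; lra.
Qed.

Lemma ex_min (I : finType) (i0 : I) (F : I -> R) : exists i, forall j, F i <= F j.
Proof.
by case: (@arg_minP _ _ I i0 predT F isT) => i _ h; exists i => j; apply: h.
Qed.

Lemma sum_le_eq (I : finType) (F G : I -> R) :
  (forall i, F i <= G i) -> \sum_i F i = \sum_i G i -> forall i, F i = G i.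
Proof.
move=> le eq i; have : \sum_i (G i - F i) = 0 by rewrite sumrB eq subrr.
move=> h0.
have h : G i - F i = 0.
  by apply: (psumr_eq0P _ h0) => // j _; rewrite subr_ge0; exact: le.
by apply/eqP; rewrite eq_sym -subr_eq0 h.
Qed.

End Clamp.
Arguments maxP' {R}. Arguments minP' {R}. Arguments clampP {R}.
Arguments clamp1 {R}. Arguments clamp2 {R}. Arguments sum_le_eq {R I F G}.
Arguments ex_min {R I}.

Import numFieldNormedType.Exports.
Set Implicit Arguments. Unset Strict Implicit.

Section Lin.
Variables (R : realType) (n : nat) (P : 'M[R]_n.+1) (pi : 'cV[R]_n.+1).
Hypothesis Pge0 : forall i j, 0 <= P i j.
Hypothesis Prow : forall i, \sum_j P i j = 1.
Hypothesis Pirr : irreducible P.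
Hypothesis pi_inv : P^T *m pi = pi.
Hypothesis pi_ge0 : forall i, 0 <= pi i 0.
Hypothesis pi_sum : \sum_i pi i 0 = 1.

Lemma addsub (a b cc : R) : a + cc - (b + cc) = a - b.
Proof. lra. Qed.

Lemma PTE (v : 'cV[R]_n.+1) i : (P^T *m v) i 0 = \sum_j P j i * v j 0.
Proof. by rewrite mxE; apply: eq_bigr => j _; rewrite mxE. Qed.

Lemma sum_PT (v : 'cV[R]_n.+1) : \sum_i (P^T *m v) i 0 = \sum_i v i 0.
Proof.
under eq_bigr do rewrite PTE.
rewrite exchange_big /=; apply: eq_bigr => j _.
by rewrite -mulr_suml Prow mul1r.
Qed.

Lemma inv_zero (v : 'cV[R]_n.+1) : P^T *m v = v -> (forall i, 0 <= v i 0) ->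
  forall k, v k 0 = 0 -> forall j, v j 0 = 0.
Proof.
move=> Hv H0 k Hk j.
have /connectP [p pth lst] := Pirr j k.
elim: p j pth lst => [|a p IH] j /=; first by move=> _ <-.
move=> /andP[hja pth] lst.
have va := IH a pth lst.
have E : \sum_l P l a * v l 0 = 0 by rewrite -PTE Hv.
have := psumr_eq0P (fun l _ => mulr_ge0 (Pge0 l a) (H0 l)) E (i:=j) isT.
by move/eqP; rewrite mulf_eq0 (gt_eqF hja) /= => /eqP.
Qed.

Lemma pi_pos i : 0 < pi i 0.
Proof.
rewrite lt_neqAle pi_ge0 andbT; apply/eqP => h.
have z := inv_zero pi_inv pi_ge0 (esym h).
by move: pi_sum; rewrite big1 // => /esym/eqP; rewrite oner_eq0.
Qed.

Lemma inv_mult (u : 'cV[R]_n.+1) : P^T *m u = u -> exists t, u = t *: pi.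
Proof.
move=> Hu.
have [k hk] := ex_min ord0 (fun i => u i 0 / pi i 0).
exists (u k 0 / pi k 0); set t := u k 0 / pi k 0.
set v := u - t *: pi.
have Hv : P^T *m v = v by rewrite mulmxBr -scalemxAr pi_inv Hu.
have vE i : v i 0 = u i 0 - t * pi i 0 by rewrite !mxE.
have v0 i : 0 <= v i 0.
  by rewrite vE subr_ge0 -ler_pdivlMr ?pi_pos //; exact: hk.
have vk : v k 0 = 0 by rewrite vE /t divfK ?subrr // gt_eqF ?pi_pos.
apply/matrixP => i j; rewrite (ord1 j).
have := inv_zero Hv v0 vk i; rewrite vE => /eqP; rewrite subr_eq0 => /eqP ->.
by rewrite !mxE.
Qed.

Variables (w c : 'cV[R]_n.+1).
Hypothesis w0 : forall i, 0 <= w i 0.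

Lemma solE x i : solset P w c x ->
  x i 0 = Num.min (Num.max ((P^T *m x) i 0 + c i 0) 0) (w i 0).
Proof. by move=> Hx; rewrite {1}Hx !mxE. Qed.

Lemma lin_of_pair x y : solset P w c x -> solset P w c y ->
  (exists k, y k 0 < x k 0) ->
  x = P^T *m x + c /\ y = P^T *m y + c.
Proof.
move=> Hx Hy [k hk].
set d : 'cV[R]_n.+1 := \col_i Num.max (x i 0 - y i 0) 0.
have dE i : d i 0 = Num.max (x i 0 - y i 0) 0 by rewrite mxE.
have d0 i : 0 <= d i 0 by rewrite dE le_max lexx orbT.
have ineq i : d i 0 <= (P^T *m d) i 0.
  rewrite dE (solE i Hx) (solE i Hy).
  apply: le_trans; first exact: clamp1.
  rewrite ge_max; apply/andP; split; last by rewrite PTE sumr_ge0 // => j _; rewrite mulr_ge0.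
  rewrite addsub !PTE -sumrB; apply: ler_sum => j _.
  by rewrite -mulrBr ler_wpM2l // dE le_max lexx.
have eqd := sum_le_eq ineq (esym (sum_PT d)).
have Hd : P^T *m d = d by apply/matrixP => i j; rewrite (ord1 j) eqd.
have dpos i : 0 < d i 0.
  rewrite lt_neqAle d0 andbT; apply/eqP => h.
  have := inv_zero Hd d0 (esym h) k; rewrite dE => /eqP.
  by rewrite eq_le => /andP[+ _]; rewrite ge_max => /andP[h1 _]; lra.
have dx i : d i 0 = x i 0 - y i 0.
  have := dpos i; rewrite dE; have [[-> //]|[-> h]] := maxP' (x i 0 - y i 0) 0.
  by rewrite ltxx.
have key i : (P^T *m x) i 0 + c i 0 - ((P^T *m y) i 0 + c i 0) = x i 0 - y i 0.
  rewrite addsub !PTE -sumrB -dx eqd PTE.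
  by apply: eq_bigr => j _; rewrite -mulrBr dx.
have both i : x i 0 = (P^T *m x) i 0 + c i 0 /\ y i 0 = (P^T *m y) i 0 + c i 0.
  have lt : (P^T *m y) i 0 + c i 0 < (P^T *m x) i 0 + c i 0.
    by rewrite -subr_gt0 key -dx dpos.
  have := clamp2 _ _ _ (w0 i) lt; rewrite -(solE i Hx) -(solE i Hy) key.
  by apply.
split; apply/matrixP => i j; rewrite (ord1 j) mxE; have [h1 h2] := both i.
  by rewrite -h1.
by rewrite -h2.
Qed.

Lemma lin_of_neq x y : solset P w c x -> solset P w c y -> x <> y ->
  x = P^T *m x + c.
Proof.
move=> Hx Hy nxy.
have [k hk] : exists k, x k 0 != y k 0.
  apply/existsP; rewrite -negb_forall; apply/negP => /forallP h.
  by apply: nxy; apply/matrixP => i j; rewrite (ord1 j); apply/eqP; exact: h.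
case: (ltgtP (x k 0) (y k 0)) hk => // h _.
  by case: (lin_of_pair Hy Hx (ex_intro _ k h)).
by case: (lin_of_pair Hx Hy (ex_intro _ k h)).
Qed.

Lemma sum_c_lin x : x = P^T *m x + c -> \sum_i c i 0 = 0.
Proof.
move=> Hx.
have : \sum_i x i 0 = \sum_i x i 0 + \sum_i c i 0.
  rewrite -{2}(sum_PT x) -big_split /=; apply: eq_bigr => i _.
  by rewrite {1}Hx mxE.
lra.
Qed.

End Lin.

Section Colstoch.
Variables (R : realType) (N : nat).

Definition colstoch (M : 'M[R]_N.+1) :=
  (forall i j, 0 <= M i j) /\ (forall j, \sum_i M i j = 1).

Definition norm1 (v : 'cV[R]_N.+1) := \sum_i `|v i 0|.

Lemma norm1_ge0 (v : 'cV[R]_N.+1) : 0 <= norm1 v.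
Proof. by rewrite sumr_ge0. Qed.

Lemma le_sum_term (F : 'I_N.+1 -> R) l : (forall i, 0 <= F i) -> F l <= \sum_i F i.
Proof. by move=> h; rewrite (bigD1 l) //= lerDl sumr_ge0. Qed.

Lemma entry_le_norm1 (v : 'cV[R]_N.+1) i : `|v i 0| <= norm1 v.
Proof. exact: le_sum_term. Qed.

Lemma colstoch1 : colstoch 1%:M.
Proof.
split=> [i j|j]; first by rewrite mxE mulrn_wge0.
rewrite (bigD1 j) //= mxE eqxx mulr1n big1 ?addr0 // => i /negbTE h.
by rewrite mxE h mulr0n.
Qed.

Lemma colstoch_mul (M1 M2 : 'M[R]_N.+1) : colstoch M1 -> colstoch M2 -> colstoch (M1 *m M2).
Proof.
move=> [p1 s1] [p2 s2]; split=> [i j|j].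
  by rewrite mxE sumr_ge0 // => l _; rewrite mulr_ge0.
under eq_bigr do rewrite mxE.
rewrite exchange_big /= -(s2 j); apply: eq_bigr => l _.
by rewrite -mulr_suml s1 mul1r.
Qed.

Lemma mulmx_col (M : 'M[R]_N.+1) (v : 'cV[R]_N.+1) i : (M *m v) i 0 = \sum_j M i j * v j 0.
Proof. by rewrite mxE. Qed.

Lemma colstoch_sum (M : 'M[R]_N.+1) (v : 'cV[R]_N.+1) : colstoch M -> \sum_i (M *m v) i 0 = \sum_i v i 0.
Proof.
move=> [p s]; under eq_bigr do rewrite mulmx_col.
rewrite exchange_big /=; apply: eq_bigr => j _.
by rewrite -mulr_suml s mul1r.
Qed.

Lemma colstoch_norm (M : 'M[R]_N.+1) (v : 'cV[R]_N.+1) : colstoch M -> norm1 (M *m v) <= norm1 v.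
Proof.
move=> [p s]; rewrite /norm1.
apply: (@le_trans _ _ (\sum_i \sum_j M i j * `|v j 0|)).
  apply: ler_sum => i _; rewrite mulmx_col.
  apply: le_trans (ler_norm_sum _ _ _) _.
  by apply: ler_sum => j _; rewrite normrM ger0_norm.
rewrite exchange_big /=; apply: ler_sum => j _.
by rewrite -mulr_suml s mul1r.
Qed.

Lemma posneg (t : R) :
  t = Num.max t 0 - Num.max (- t) 0 /\ `|t| = Num.max t 0 + Num.max (- t) 0.
Proof.
have [[-> h1]|[-> h1]] := maxP' t 0; have [[-> h2]|[-> h2]] := maxP' (-t) 0;
  first [rewrite ger0_norm //; split; lra | rewrite ltr0_norm //; split; lra | lra].
Qed.

Lemma absdiff (p q e : R) : e <= p -> e <= q -> `|p - q| <= p + q - (e + e).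
Proof.
move=> hp hq; have [h|h] := leP q p.
  by rewrite ger0_norm ?subr_ge0 //; lra.
by rewrite ltr0_norm ?subr_lt0 //; lra.
Qed.

Lemma cs_contraction (M : 'M[R]_N.+1) (d : R) (v : 'cV[R]_N.+1) : colstoch M -> 0 < d -> (forall i j, d <= M i j) ->
  \sum_i v i 0 = 0 -> norm1 (M *m v) <= (1 - d) * norm1 v.
Proof.
move=> [Mp Ms] d0 Md sv.
pose vp j := Num.max (v j 0) 0; pose vm j := Num.max (- v j 0) 0.
have vpm j : v j 0 = vp j - vm j by case: (posneg (v j 0)).
have vabs j : `|v j 0| = vp j + vm j by case: (posneg (v j 0)).
have vp0 j : 0 <= vp j by rewrite /vp le_max lexx orbT.
have vm0 j : 0 <= vm j by rewrite /vm le_max lexx orbT.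
pose s := \sum_j vp j.
have sm : \sum_j vm j = s.
  have : \sum_j (vp j - vm j) = 0.
    by rewrite -[X in _ = X]sv; apply: eq_bigr => j _; rewrite vpm.
  by rewrite sumrB => /eqP; rewrite subr_eq0 => /eqP <-.
have nv : norm1 v = s + s.
  by rewrite /norm1 -{2}sm -big_split /=; apply: eq_bigr => j _; rewrite vabs.
pose p i := \sum_j M i j * vp j; pose q i := \sum_j M i j * vm j.
have Mv i : (M *m v) i 0 = p i - q i.
  by rewrite mulmx_col -sumrB; apply: eq_bigr => j _; rewrite -mulrBr -vpm.
have pge i : d * s <= p i.
  by rewrite /s mulr_sumr; apply: ler_sum => j _; rewrite ler_wpM2r.
have qge i : d * s <= q i.
  by rewrite -sm mulr_sumr; apply: ler_sum => j _; rewrite ler_wpM2r.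
have pq : \sum_i (p i + q i) = norm1 v.
  have ex (f : 'I_N.+1 -> R) : \sum_i \sum_j M i j * f j = \sum_j f j.
    by rewrite exchange_big /=; apply: eq_bigr => j _; rewrite -mulr_suml Ms mul1r.
  rewrite /norm1 big_split /= /p /q !ex -big_split /=.
  by apply: eq_bigr => j _; rewrite vabs.
have : norm1 (M *m v) <= \sum_i (p i + q i - (d * s + d * s)).
  by apply: ler_sum => i _; rewrite Mv; apply: absdiff.
rewrite sumrB pq sumr_const card_ord mulrS.
have s0 : 0 <= s by apply: sumr_ge0 => j _; exact: vp0.
have : 0 <= (d * s + d * s) *+ N by rewrite mulrn_wge0 // addr_ge0 // mulr_ge0 // ltW.
rewrite nv; nra.
Qed.

End Colstoch.

Section Half.
Variables (R : realType) (n : nat) (P : 'M[R]_n.+1).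
Hypothesis Pge0 : forall i j, 0 <= P i j.
Hypothesis Prow : forall i, \sum_j P i j = 1.
Hypothesis Pirr : irreducible P.

Definition Am : 'M[R]_n.+1 := 2^-1 *: (1%:M + P^T).

Lemma AmE i j : Am i j = 2^-1 * ((i == j)%:R + P j i).
Proof. by rewrite !mxE. Qed.

Lemma halfE v : halfstep P v = Am *m v.
Proof. by rewrite /halfstep /Am -scalemxAl mulmxDl mul1mx. Qed.

Lemma iterE k v : iter k (halfstep P) v = Am ^+ k *m v.
Proof.
elim: k => [|k IH]; first by rewrite expr0 mul1mx.
by rewrite iterS IH halfE mulmxA mulmxE -exprS.
Qed.

Lemma colstochA : colstoch Am.
Proof.
split=> [i j|j].
  by rewrite AmE mulr_ge0 // ?invr_ge0 ?ler0n // addr_ge0 // ler0n.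
under eq_bigr do rewrite AmE.
rewrite -mulr_sumr big_split /= Prow (bigD1 j) //= eqxx big1 ?addr0.
  by rewrite mulVf // pnatr_eq0.
by move=> i /negbTE ->.
Qed.

Lemma colstoch_pow k : colstoch (Am ^+ k).
Proof.
elim: k => [|k IH]; first by rewrite expr0; exact: colstoch1.
rewrite exprS -mulmxE; exact: colstoch_mul colstochA IH.
Qed.

Lemma Am_pos i j : 0 < P j i -> 0 < Am i j.
Proof. by move=> h; rewrite AmE mulr_gt0 // ?invr_gt0 ?ltr0n // ltr_pwDr // ler0n. Qed.

Lemma Am_diag j : 0 < Am j j.
Proof. by rewrite AmE eqxx mulr_gt0 // ?invr_gt0 ?ltr0n // ltr_pwDl. Qed.

Lemma pow_entry_ge k i j l :
  (Am ^+ k.+1) i j >= (Am ^+ k) i l * Am l j.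
Proof.
rewrite exprSr -mulmxE [(_ *m _) i j]mxE.
apply: (le_sum_term (F := fun l => (Am ^+ k) i l * Am l j)) => l'.
by rewrite mulr_ge0 //; [case: (colstoch_pow k) | case: colstochA].
Qed.


Lemma diag_pos k j : 0 < (Am ^+ k) j j.
Proof.
elim: k => [|k IH]; first by rewrite expr0 mxE eqxx ltr01.
exact: lt_le_trans (mulr_gt0 IH (Am_diag j)) (pow_entry_ge _ _ _ _).
Qed.

Lemma path_pos p j : path [rel a b | 0 < P a b] j p ->
  forall k, (size p <= k)%N -> 0 < (Am ^+ k) (last j p) j.
Proof.
elim: p j => [|a p IH] j /=; first by move=> _ k _; exact: diag_pos.
move=> /andP[hja pth] [|k] //= hk.
exact: lt_le_trans (mulr_gt0 (IH a pth k hk) (Am_pos hja)) (pow_entry_ge _ _ _ _).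
Qed.

Lemma ex_pos_pow : exists m, (0 < m)%N /\ forall i j, 0 < (Am ^+ m) i j.
Proof.
have : forall ij : 'I_n.+1 * 'I_n.+1, exists m0 : nat,
    forall k, (m0 <= k)%N -> 0 < (Am ^+ k) ij.1 ij.2.
  move=> [i j] /=; have /connectP [p pth ->] := Pirr j i.
  by exists (size p) => k hk; exact: path_pos.
case/fin_all_exists => f hf.
exists (\max_ij f ij).+1; split => // i j.
by apply: (hf (i, j)); apply: leqW; exact: (leq_bigmax (i, j)).
Qed.

End Half.

Section Series.
Variables (R : realType) (n : nat) (P : 'M[R]_n.+1).
Hypothesis Pge0 : forall i j, 0 <= P i j.
Hypothesis Prow : forall i, \sum_j P i j = 1.
Hypothesis Pirr : irreducible P.

Lemma contrB : exists m d, (0 < m)%N /\ 0 < d /\ forall v : 'cV[R]_n.+1,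
  \sum_i v i 0 = 0 -> norm1 (Am P ^+ m *m v) <= (1 - d) * norm1 v.
Proof.
have [m [m0 hpos]] := ex_pos_pow Pge0 Prow Pirr.
have [[i0 j0] hmin] := ex_min (ord0, ord0) (fun ij : 'I_n.+1 * 'I_n.+1 => (Am P ^+ m) ij.1 ij.2).
exists m, ((Am P ^+ m) i0 j0); split => //; split; first exact: hpos.
move=> v sv. apply: (cs_contraction (colstoch_pow Pge0 Prow m) (hpos i0 j0) _ sv).
by move=> i j; exact: (hmin (i, j)).
Qed.

Lemma sum_bound : exists Mc, forall K (v : 'cV[R]_n.+1), \sum_i v i 0 = 0 ->
  \sum_(0 <= k < K) norm1 (Am P ^+ k *m v) <= Mc * norm1 v.
Proof.
have [m [d [m0 [d0 hc]]]] := contrB.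
exists (m%:R / d + m%:R) => K; elim/ltn_ind: K => K IH v sv.
have nv0 := norm1_ge0 v.
have Mc0 : 0 <= m%:R / d by rewrite divr_ge0 // ltW.
case: (leqP K m) => hK.
  apply: (@le_trans _ _ (\sum_(0 <= k < K) norm1 v)).
    by apply: ler_sum => k _; apply: colstoch_norm; exact: (colstoch_pow Pge0 Prow).
  rewrite sumr_const_nat subn0 -[norm1 v *+ K]mulr_natl; apply: (ler_wpM2r nv0).
  apply: (@le_trans _ _ (m%:R)); first by rewrite ler_nat.
  by rewrite -subr_ge0 addrK.
rewrite (_ : \sum_(0 <= k < K) norm1 (Am P ^+ k *m v) =
   \sum_(0 <= k < m) norm1 (Am P ^+ k *m v) + \sum_(m <= k < K) norm1 (Am P ^+ k *m v)); last first.
  by apply: big_cat_nat => //; exact: ltnW.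
rewrite -{2}(add0n m) big_addn.
have sv' : \sum_i (Am P ^+ m *m v) i 0 = 0.
  by rewrite colstoch_sum //; exact: (colstoch_pow Pge0 Prow).
have IH' := IH (K - m)%N _ (Am P ^+ m *m v) sv'.
have -> : \sum_(0 <= i < K - m) norm1 (Am P ^+ (i + m) *m v) =
          \sum_(0 <= i < K - m) norm1 (Am P ^+ i *m (Am P ^+ m *m v)).
  by apply: eq_bigr => k _; rewrite exprD mulmxA mulmxE.
have h1 : \sum_(0 <= i < m) norm1 (Am P ^+ i *m v) <= m%:R * norm1 v.
  apply: (@le_trans _ _ (\sum_(0 <= k < m) norm1 v)).
    by apply: ler_sum => k _; apply: colstoch_norm; exact: (colstoch_pow Pge0 Prow).
  by rewrite sumr_const_nat subn0 -[norm1 v *+ m]mulr_natl.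
have h2 := IH' ltac:(rewrite ltn_subrL; apply/andP; split => //; exact: leq_trans m0 (ltnW hK)).
have h3 := hc v sv.
have h5 : (m%:R / d + m%:R) * norm1 (Am P ^+ m *m v) <=
          (m%:R / d + m%:R) * ((1 - d) * norm1 v).
  by apply: ler_wpM2l; rewrite ?addr_ge0.
have h6 : (m%:R / d + m%:R) * ((1 - d) * norm1 v) =
    (m%:R / d + m%:R) * norm1 v - m%:R * norm1 v - m%:R * d * norm1 v.
  by field; rewrite gt_eqF.
have h7 : 0 <= m%:R * d * norm1 v by rewrite !mulr_ge0 // ltW.
lra.
Qed.

End Series.

Section Nu.
Variables (R : realType) (n : nat) (P : 'M[R]_n.+1) (c : 'cV[R]_n.+1).
Hypothesis Pge0 : forall i j, 0 <= P i j.
Hypothesis Prow : forall i, \sum_j P i j = 1.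
Hypothesis Pirr : irreducible P.
Hypothesis sc : \sum_i c i 0 = 0.

Let u i k := (iter k (halfstep P) c) i 0.

Lemma u_rec i k : 2 * u i k.+1 = u i k + \sum_j P j i * u j k.
Proof.
rewrite /u iterS /halfstep !mxE mulrA mulfV ?mul1r ?pnatr_eq0 //.
by congr (_ + _); apply: eq_bigr => j _; rewrite mxE.
Qed.

Lemma cvg_u i : cvgn (series (u i)).
Proof.
have [Mc hM] := sum_bound Pge0 Prow Pirr.
apply: normed_cvg; apply: nondecreasing_is_cvgn.
  by apply: nondecreasing_series => k _ _; exact: normr_ge0.
exists (Mc * norm1 c) => _ [K _ <-] /=.
apply: le_trans (hM K c sc); apply: ler_sum => k _.
by rewrite /u iterE; exact: entry_le_norm1.
Qed.

Lemma series_id i K :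
  series (u i) K - \sum_j P j i * series (u j) K = 2 * (c i 0 - u i K).
Proof.
have hA : series (u i) K.+1 = c i 0 + \sum_(0 <= k < K) u i k.+1.
  by rewrite /series /= big_nat_recl.
have hB : series (u i) K.+1 = series (u i) K + u i K.
  by rewrite /series /= big_nat_recr.
have hC : 2 * \sum_(0 <= k < K) u i k.+1 =
    series (u i) K + \sum_j P j i * series (u j) K.
  rewrite mulr_sumr (eq_bigr _ (fun k _ => u_rec i k)) big_split /=.
  congr (_ + _); rewrite exchange_big /=; apply: eq_bigr => j _.
  by rewrite /series /= mulr_sumr.
lra.
Qed.

Lemma nu_fix : nu P c = P^T *m nu P c + c.
Proof.
pose L i := limn (series (u i)).
have hL i : series (u i) @ \oo --> L i := @cvg_u i.
have eqL i : L i - \sum_j P j i * L j = 2 * (c i 0 - 0).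
  have h1 : (fun K => series (u i) K - \sum_j P j i * series (u j) K) @ \oo -->
            L i - \sum_j P j i * L j.
    apply: cvgB => //; apply: cvg_big => //.
      exact: (@pseudometric_normed_Zmodule.add_continuous R R^o).
    by move=> j _; apply: cvgMl_tmp.
  have h2 : (fun K => 2 * (c i 0 - u i K)) @ \oo --> 2 * (c i 0 - 0).
    apply: cvgMl_tmp; apply: cvgB; first exact: cvg_cst.
    exact: cvg_series_cvg_0 (@cvg_u i).
  have e : (fun K => series (u i) K - \sum_j P j i * series (u j) K) =
           (fun K => 2 * (c i 0 - u i K)).
    by apply: funext => K; exact: series_id.
  rewrite e in h1; exact: (cvg_unique _ h1 h2).
apply/matrixP => i j; rewrite (ord1 j) !mxE.
have -> : \sum_j0 (P^T) i j0 * (nu P c) j0 0 = 2^-1 * \sum_j P j i * L j.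
  rewrite mulr_sumr; apply: eq_bigr => j0 _; rewrite !mxE mulrCA.
  by [].
have := eqL i; rewrite /L /u; lra.
Qed.

End Nu.

Unset Implicit Arguments. Set Strict Implicit.

Lemma le_minI (R : realType) (n : nat) (F : 'I_n.+1 -> R) (b : R) :
  (b <= minI F) <-> (forall i, b <= F i).
Proof.
split.
  move=> h i; apply: (le_trans h); rewrite /minI.
  elim: (index_enum _) (mem_index_enum i) => // a r IH.
  rewrite inE big_cons /= ge_min => /orP[/eqP <-|h']; first by rewrite lexx.
  by rewrite IH ?orbT.
move=> h; rewrite /minI; apply: (big_ind (fun t => b <= t)) => //.
  by move=> s t hs ht; rewrite le_min hs ht.
Qed.

Theorem proposition4 (R : realType) (n : nat) (P : 'M[R]_n.+1)
    (w c pi : 'cV[R]_n.+1) :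
  stochastic P -> irreducible P ->
  (forall i, 0 <= w i 0) ->
  P^T *m pi = pi -> (forall i, 0 <= pi i 0) -> \sum_i pi i 0 = 1 ->
  let X := solset P w c in
  let v := nu P c in
  let m1 := minI (fun i => v i 0 / pi i 0) in
  let m2 := minI (fun i => (w i 0 - v i 0) / pi i 0) in
  ((exists x y, X x /\ X y /\ x <> y) <->
     (\sum_i c i 0 = 0 /\ 0 < m1 + m2)) /\
  ((exists x y, X x /\ X y /\ x <> y) ->
     X = [set x | exists alpha : R, - m1 <= alpha <= m2 /\ x = v + alpha *: pi]).
Proof.
move=> [Pge0 P1] Pirr w0 pi_inv pi_ge0 pi_sum X v m1 m2.
have Prow i : \sum_j P i j = 1.
  have := congr1 (fun M : 'cV[R]_n.+1 => M i 0) P1; rewrite !mxE => <-.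
  by apply: eq_bigr => j _; rewrite mxE mulr1.
have pipos := pi_pos Pge0 Pirr pi_inv pi_ge0 pi_sum.
have linneq := lin_of_neq Pge0 Prow Pirr w0.
have lin_char : \sum_i c i 0 = 0 -> forall x : 'cV[R]_n.+1,
    x = P^T *m x + c <-> exists a, x = v + a *: pi.
  move=> sc x; have nf : v = P^T *m v + c := nu_fix Pge0 Prow Pirr sc; split.
    move=> hx; have := inv_mult Pge0 Pirr pi_inv pi_ge0 pi_sum (u := x - v).
    case.
      have e1 : P^T *m x = x - c by rewrite [in RHS]hx addrK.
      have e2 : P^T *m v = v - c by rewrite [in RHS]nf addrK.
      by rewrite mulmxBr e1 e2 opprB addrA subrK.
    by move=> a ha; exists a; rewrite -ha addrC subrK.
  move=> [a ->]; rewrite mulmxDr -scalemxAr pi_inv {1}nf.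
  by rewrite addrAC.
have box a : (forall i, 0 <= (v + a *: pi) i 0 <= w i 0) <-> - m1 <= a <= m2.
  have vE i : (v + a *: pi) i 0 = v i 0 + a * pi i 0.
    by rewrite [(v + _) i 0]mxE [(a *: pi) i 0]mxE.
  split.
    move=> h; apply/andP; split.
      rewrite lerNl; apply/le_minI => i; rewrite ler_pdivlMr // mulNr lerNl.
      by have := h i; rewrite vE => /andP[h1 _]; lra.
    apply/le_minI => i; rewrite ler_pdivlMr //.
    by have := h i; rewrite vE => /andP[_ h1]; lra.
  move=> /andP[h1 h2] i; rewrite vE; apply/andP; split.
    move: h1; rewrite lerNl => /le_minI /(_ i); rewrite ler_pdivlMr // mulNr lerNl.
    lra.
  move: h2 => /le_minI /(_ i); rewrite ler_pdivlMr //; lra.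
have inX_box x : X x -> forall i, 0 <= x i 0 <= w i 0.
  move=> hx i; rewrite (solE i hx).
  have [[_ ->]|[[h ->]|[_ ->]]] := clampP (w i 0) ((P^T *m x) i 0 + c i 0) (w0 i).
  - by rewrite lexx w0.
  - exact: h.
  - by rewrite w0 lexx.
have lin_box_X x : x = P^T *m x + c -> (forall i, 0 <= x i 0 <= w i 0) -> X x.
  move=> hx hb; rewrite /X /solset /= -hx.
  apply/matrixP => i j; rewrite (ord1 j) mxE.
  have /andP[h1 h2] := hb i.
  by rewrite (max_l h1) (min_l h2).
have param x : \sum_i c i 0 = 0 -> X x -> (exists y, X y /\ x <> y) ->
    exists a, - m1 <= a <= m2 /\ x = v + a *: pi.
  move=> sc hx [y [hy nxy]].
  have [a ha] := (lin_char sc x).1 (linneq _ _ _ hx hy nxy).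
  exists a; split => //; apply/box; rewrite -ha; exact: inX_box.
have fromparam a : \sum_i c i 0 = 0 -> - m1 <= a <= m2 -> X (v + a *: pi).
  move=> sc ha; apply: lin_box_X; first by apply/(lin_char sc); exists a.
  exact/box.
have two_sc : (exists x y, X x /\ X y /\ x <> y) -> \sum_i c i 0 = 0.
  by move=> [x [y [hx [hy nxy]]]]; exact: (sum_c_lin Prow (linneq _ _ _ hx hy nxy)).
split.
  split.
    move=> H; have sc := two_sc H; split => //.
    move: H => [x [y [hx [hy nxy]]]].
    have [a [ha ea]] := param x sc hx (ex_intro _ y (conj hy nxy)).
    have [b [hb eb]] := param y sc hy (ex_intro _ x (conj hx (nesym nxy))).
    case: (ltgtP a b) => hab.
    - move/andP: ha => [ha1 ha2]; move/andP: hb => [hb1 hb2]; lra.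
    - move/andP: ha => [ha1 ha2]; move/andP: hb => [hb1 hb2]; lra.
    - by exfalso; apply: nxy; rewrite ea eb hab.
  move=> [sc hm].
  exists (v + (- m1) *: pi), (v + m2 *: pi); split; last split.
  - by apply: fromparam => //; rewrite lexx /=; lra.
  - by apply: fromparam => //; rewrite lexx andbT; lra.
  - move=> /(congr1 (fun M : 'cV[R]_n.+1 => M ord0 0)); rewrite !mxE => e.
    have p0 := pipos ord0.
    have : (- m1 - m2) * pi ord0 0 = 0 by rewrite mulrBl; lra.
    move/eqP; rewrite mulf_eq0 (gt_eqF p0) orbF => /eqP; lra.
move=> H; have sc := two_sc H.
move: H => [x [y [hx [hy nxy]]]].
apply/seteqP; split => z /=.
  move=> hz; apply: param => //.
  case: (boolP (z == x)) => [/eqP ->|/eqP nzx].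
    by exists y; split.
  by exists x; split.
by move=> [a [ha ->]]; exact: fromparam.
Qed.
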